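(* Let $k>24$ be an integer. Then for every finite point set $\mathcal{P}\subset\mathbb{R}^2$, the overlapping Yao graph $\mathsf{OY}_k(\mathcal{P})$ is a geometric $\tau_k$-spanner, where $$\tau_k=\left(1-2\sin\Big(\frac{\pi}{k}+\frac{\pi}{8}\Big)\right)^{-1}.$$
   Context: Polar angles are measured from the positive $x$-axis, modulo $2\pi$. $C_u(\gamma_1,\gamma_2)$ denotes the set of points $w\neq u$ such that the polar angle of $\overrightarrow{uw}$ lies in $[\gamma_1,\gamma_2)$. Overlapping Yao graph $\mathsf{OY}_k(\mathcal{P})$: let $\gamma=\lceil k/4\rceil\cdot 2\pi/k$; for each $u\in\mathcal{P}$ and each $j=0,\dots,k-1$, among the points $v\in\mathcal{P}\cap C_u(2j\pi/k,\,2j\pi/k+\gamma)$ (if any) select one with $|uv|$ smallest and add the edge $\overrightarrow{uv}$ (ties broken arbitrarily but consistently). A graph $G$ with vertex set $\mathcal{P}$ (edges regarded as undirected with Euclidean lengths) is a geometric $t$-spanner if for all $u,v\in\mathcal{P}$ the shortest $u$-$v$ path in $G$ has length at most $t|uv|$. *)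

(* Defs.v *)
From Stdlib Require Import Reals Lra List.
Open Scope R_scope.

Definition pt : Type := (R * R)%type.

Definition dist (p q : pt) : R :=
  sqrt ((fst p - fst q) ^ 2 + (snd p - snd q) ^ 2).

(* w belongs to C_u(g1,g2): w <> u and the polar angle of uw lies in [g1,g2)
   modulo 2*pi, i.e. uw = |uw| (cos th, sin th) for some th in [g1,g2). *)
Definition in_cone (u w : pt) (g1 g2 : R) : Prop :=
  w <> u /\
  exists th, g1 <= th < g2 /\
    fst w - fst u = dist u w * cos th /\
    snd w - snd u = dist u w * sin th.

(* gamma = ceil(k/4) * 2 pi / k *)
Definition oy_gamma (k : nat) : R :=
  INR ((k + 3) / 4)%nat * (2 * PI) / INR k.

Definition cone_start (k j : nat) : R := 2 * INR j * PI / INR k.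

(* sel u j is a valid choice of the j-th edge of u in OY_k(P):
   a nearest point of P in the cone C_u(2j pi/k, 2j pi/k + gamma), or None
   if that cone contains no point of P. *)
Definition is_OY_selection (k : nat) (P : list pt)
  (sel : pt -> nat -> option pt) : Prop :=
  forall u, In u P -> forall j, (j < k)%nat ->
    match sel u j with
    | None => forall v, In v P ->
        ~ in_cone u v (cone_start k j) (cone_start k j + oy_gamma k)
    | Some v => In v P /\
        in_cone u v (cone_start k j) (cone_start k j + oy_gamma k) /\
        (forall w, In w P ->
           in_cone u w (cone_start k j) (cone_start k j + oy_gamma k) ->
           dist u v <= dist u w)
    end.

Definition OY_arc (k : nat) (P : list pt) (sel : pt -> nat -> option pt)
  (u v : pt) : Prop :=
  In u P /\ exists j, (j < k)%nat /\ sel u j = Some v.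

Fixpoint walk_ok (E : pt -> pt -> Prop) (a : pt) (l : list pt) : Prop :=
  match l with
  | nil => True
  | b :: l' => (E a b \/ E b a) /\ walk_ok E b l'
  end.

Fixpoint walk_len (a : pt) (l : list pt) : R :=
  match l with
  | nil => 0
  | b :: l' => dist a b + walk_len b l'
  end.

(* geometric t-spanner: for all u v in P, the shortest u-v path has length
   <= t |uv| (equivalently some u-v path has length <= t |uv|). *)
Definition is_spanner (P : list pt) (E : pt -> pt -> Prop) (t : R) : Prop :=
  forall u v, In u P -> In v P ->
    exists l, walk_ok E u l /\ last l u = v /\ walk_len u l <= t * dist u v.

Definition tau (k : nat) : R := / (1 - 2 * sin (PI / INR k + PI / 8)).

(* Main.v *)
Require Import Defs.
From Stdlib Require Import Reals List Lra Lia.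
Import Defs.
Open Scope R_scope.

Lemma dist_pos u v : 0 <= dist u v.
Proof. apply sqrt_pos. Qed.

Lemma dist_sq u v : dist u v ^ 2 = (fst u - fst v)^2 + (snd u - snd v)^2.
Proof. unfold dist. rewrite pow2_sqrt; [reflexivity|]. apply Rplus_le_le_0_compat; apply pow2_ge_0. Qed.

Lemma dist_sym u v : dist u v = dist v u.
Proof. unfold dist. f_equal. ring. Qed.

Lemma key_ineq (a b c s X : R) : 0 < a -> a <= b -> 0 <= s < 1 ->
  1 - s^2/2 <= c -> X = a^2 + b^2 - 2*a*b*c ->
  sqrt X <= b - (1 - s) * a.
Proof.
  intros Ha Hab Hs Hc HX.
  assert (H0 : 0 <= b - (1-s)*a) by nra.
  rewrite <- (sqrt_pow2 (b - (1-s)*a)) by exact H0.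
  apply sqrt_le_1_alt. subst X.
  assert (0 <= s * a * (b - a) * (2 - s)).
  { apply Rmult_le_pos; [apply Rmult_le_pos; [apply Rmult_le_pos|]|]; lra. }
  assert (0 <= a * b * (c - (1 - s^2/2))) by (apply Rmult_le_pos; nra).
  nra.
Qed.

Lemma polar (u v : pt) (L : R) : v <> u -> 0 < L < 2 * PI ->
  exists th, L <= th < L + 2 * PI /\
    fst v - fst u = dist u v * cos th /\ snd v - snd u = dist u v * sin th.
Proof.
  intros Hne HL.
  set (x := fst v - fst u). set (y := snd v - snd u). set (r := dist u v).
  assert (Hr2 : r ^ 2 = x^2 + y^2) by (unfold r, x, y; rewrite dist_sq; ring).
  assert (Hr0 : 0 <= r) by apply dist_pos.
  assert (Hr : 0 < r).
  { destruct (Req_dec r 0) as [E|E]; [|lra].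
    exfalso; apply Hne. rewrite E in Hr2.
    assert (x = 0) by nra. assert (y = 0) by nra.
    destruct u, v; unfold x, y in *; simpl in *. f_equal; lra. }
  set (c := x / r).
  assert (Hcx : r * c = x) by (unfold c; field; lra).
  assert (Hc : -1 <= c <= 1).
  { assert (c^2 <= 1).
    { assert (E : r^2 * c^2 = x^2) by (rewrite <- Hcx; ring).
      assert (r^2 * c^2 <= r^2 * 1) by nra.
      apply Rmult_le_reg_l with (r^2); nra. }
    nra. }
  assert (Hs : r * sin (acos c) = Rabs y).
  { rewrite sin_acos by exact Hc.
    assert (Hq : sqrt (1 - c²) * sqrt (1 - c²) = 1 - c * c).
    { rewrite sqrt_sqrt; unfold Rsqr; nra. }
    set (q := sqrt (1 - c²)) in *.
    assert (0 <= q) by apply sqrt_pos.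
    apply Rsqr_inj.
    - apply Rmult_le_pos; lra.
    - apply Rabs_pos.
    - unfold Rsqr. rewrite <- Rabs_mult, Rabs_right by nra.
      replace (r * q * (r * q)) with (r*r*(q*q)) by ring. rewrite Hq.
      replace (r*r*(1-c*c)) with (r^2 - (r*c)^2) by ring. rewrite Hcx, Hr2. ring. }
  pose proof (acos_bound c) as Hb. pose proof PI_RGT_0.
  assert (Hex : exists t, 0 <= t <= 2 * PI /\ x = r * cos t /\ y = r * sin t /\
                  (t = 2 * PI -> False)).
  { destruct (Rle_dec 0 y) as [Hy|Hy].
    - exists (acos c). rewrite cos_acos by exact Hc. rewrite Rabs_right in Hs by lra.
      repeat split; try lra.
    - exists (2 * PI - acos c). rewrite Rabs_left in Hs by lra.
      rewrite cos_minus, sin_minus, cos_2PI, sin_2PI, cos_acos by exact Hc.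
      repeat split; try lra.
      intro E. assert (acos c = 0) by lra.
      rewrite H0, sin_0 in Hs. lra. }
  destruct Hex as [t [Ht [Hxt [Hyt Hne2]]]].
  destruct (Rle_dec L t).
  - exists t. repeat split; try lra.
  - exists (t + 2 * INR 1 * PI). rewrite cos_period, sin_period. simpl INR.
    repeat split; lra.
Qed.

Lemma floor_nat (n : nat) (x : R) : 0 <= x < INR n ->
  exists j, (j < n)%nat /\ INR j <= x < INR j + 1.
Proof.
  induction n as [|n IH]; intros Hx.
  - simpl in Hx. lra.
  - rewrite S_INR in Hx. destruct (Rlt_dec x (INR n)).
    + destruct (IH ltac:(lra)) as [j [Hj Hj2]]. exists j. split; [lia|lra].
    + exists n. split; [lia|lra].
Qed.

Lemma cos_le_helper x y : 0 <= x -> x <= y -> y <= PI -> cos y <= cos x.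
Proof.
  intros. destruct (Req_dec x y). subst; lra.
  left. apply cos_decreasing_1; lra.
Qed.

Lemma cos_abs_bound d e : Rabs d <= e -> e <= PI -> cos e <= cos d.
Proof.
  intros H1 H2. destruct (Rle_dec 0 d).
  - rewrite Rabs_right in H1 by lra. apply cos_le_helper; lra.
  - rewrite Rabs_left in H1 by lra. rewrite <- (cos_neg d). apply cos_le_helper; lra.
Qed.

Section Num.
Variable k : nat.
Hypothesis Hk : (24 < k)%nat.

Lemma INR_k_ge : 25 <= INR k.
Proof. replace 25 with (INR 25) by (simpl; lra). apply le_INR. lia. Qed.

Lemma m_bounds : INR k <= 4 * INR ((k+3)/4) <= INR k + 3.
Proof.
  assert (H := Nat.div_mod_eq (k+3) 4). assert (H2 := Nat.mod_upper_bound (k+3) 4 ltac:(lia)).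
  assert (k <= 4 * ((k+3)/4) <= k + 3)%nat by lia.
  replace 4 with (INR 4) by (simpl; lra). replace 3 with (INR 3) by (simpl; lra).
  rewrite <- mult_INR, <- plus_INR. split; apply le_INR; lia.
Qed.

Definition qq := PI / INR k.

Lemma qq_facts : 0 < qq /\ INR k * qq = PI /\ qq <= PI / 25.
Proof.
  pose proof INR_k_ge. pose proof PI_RGT_0. unfold qq. repeat split.
  - apply Rdiv_lt_0_compat; lra.
  - field; lra.
  - unfold Rdiv. apply Rmult_le_compat_l; [lra|]. apply Rinv_le_contravar; lra.
Qed.

Lemma gamma_facts : oy_gamma k = 2 * INR ((k+3)/4) * qq /\
  PI / 2 <= oy_gamma k <= PI / 2 + 3/2 * qq.
Proof.
  destruct qq_facts as [H1 [H2 H3]]. pose proof m_bounds.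
  assert (E : oy_gamma k = 2 * INR ((k+3)/4) * qq).
  { unfold oy_gamma, qq. pose proof INR_k_ge. field. lra. }
  split; [exact E|]. rewrite E.
  set (m := INR ((k+3)/4)) in *.
  assert (INR k * qq <= 4 * m * qq <= (INR k + 3) * qq) by (split; apply Rmult_le_compat_r; lra).
  lra.
Qed.

Lemma cone_start_eq j : cone_start k j = 2 * INR j * qq.
Proof. unfold cone_start, qq. pose proof INR_k_ge. field. lra. Qed.

Definition beta := qq + PI / 8.

Lemma sin_beta : 0 <= sin beta < 1/2.
Proof.
  destruct qq_facts as [H1 [H2 H3]]. pose proof PI_RGT_0. unfold beta. split.
  - apply sin_ge_0; lra.
  - rewrite <- sin_PI6. apply sin_increasing_1; lra.
Qed.

Lemma tau_eq : tau k = / (1 - 2 * sin beta).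
Proof. reflexivity. Qed.

End Num.

Lemma step (k : nat) (P : list pt) (sel : pt -> nat -> option pt) u v :
  (24 < k)%nat -> is_OY_selection k P sel -> In u P -> In v P -> v <> u ->
  exists w, In w P /\ OY_arc k P sel u w /\ 0 < dist u w /\
    dist w v <= dist u v - (1 - 2 * sin (beta k)) * dist u w.
Proof.
  intros Hk Hsel Hu Hv Hne.
  destruct (qq_facts k Hk) as [Q1 [Q2 Q3]].
  destruct (gamma_facts k Hk) as [_ [G1 G2]].
  pose proof PI_RGT_0.
  set (q := qq k) in *. set (g := oy_gamma k) in *.
  set (L := g - PI/4 - 2 * q).
  destruct (polar u v L Hne ltac:(unfold L; lra)) as [th [Hth [Hx Hy]]].
  destruct (floor_nat k ((th - L) / (2 * q))) as [j [Hj Hfl]].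
  { split.
    - apply Rmult_le_pos; [lra|]. left; apply Rinv_0_lt_compat; lra.
    - apply Rmult_lt_reg_r with (2*q); [lra|].
      unfold Rdiv. rewrite Rmult_assoc, Rinv_l by lra. lra. }
  assert (Hfl2 : 2 * INR j * q <= th - L < 2 * INR j * q + 2 * q).
  { destruct Hfl as [F1 F2].
    assert (E : (th - L) / (2*q) * (2*q) = th - L) by (field; lra).
    split.
    - rewrite <- E. apply Rmult_le_compat_r with (r := 2*q) in F1; lra.
    - rewrite <- E. apply Rmult_lt_compat_r with (r := 2*q) in F2; lra. }
  assert (Hcs := cone_start_eq k Hk j). fold q in Hcs.
  assert (Hvc : in_cone u v (cone_start k j) (cone_start k j + oy_gamma k)).
  { split; [exact Hne|]. exists th. fold g. rewrite Hcs. repeat split; try assumption; unfold L in *; lra. }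
  specialize (Hsel u Hu j Hj).
  destruct (sel u j) as [w|] eqn:Hsw.
  2:{ exfalso. exact (Hsel v Hv Hvc). }
  destruct Hsel as [Hw [Hwc Hmin]].
  specialize (Hmin v Hv Hvc).
  destruct Hwc as [Hwu [thw [Hthw [Hxw Hyw]]]].
  fold g in Hthw. rewrite Hcs in Hthw.
  exists w. split; [exact Hw|]. split.
  { split; [exact Hu|]. exists j. split; assumption. }
  set (a := dist u w) in *. set (b := dist u v) in *.
  assert (Ha : 0 < a).
  { destruct (dist_pos u w) as [H'|H']; [exact H'|]. exfalso. apply Hwu.
    fold a in H'. rewrite <- H' in Hxw, Hyw.
    destruct u, w; simpl in *. f_equal; lra. }
  split; [exact Ha|].
  pose proof (sin_beta k Hk) as Hsb.
  set (s := 2 * sin (beta k)).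
  assert (Hc : 1 - s^2/2 <= cos (thw - th)).
  { replace (1 - s^2/2) with (cos (2 * beta k)) by (rewrite cos_2a_sin; unfold s; field).
    apply cos_abs_bound.
    - unfold beta. fold q. apply Rabs_le. unfold L in *. lra.
    - unfold beta. fold q. lra. }
  apply (key_ineq a b (cos (thw - th)) s); try (unfold s; lra); try exact Hc.
  replace (fst w - fst v) with ((fst w - fst u) - (fst v - fst u)) by ring.
  replace (snd w - snd v) with ((snd w - snd u) - (snd v - snd u)) by ring.
  rewrite Hx, Hy, Hxw, Hyw. rewrite cos_minus.
  assert (Hp : cos thw ^ 2 + sin thw ^2 = 1) by (rewrite <- (sin2_cos2 thw); unfold Rsqr; ring).
  assert (Hp2 : cos th ^ 2 + sin th ^2 = 1) by (rewrite <- (sin2_cos2 th); unfold Rsqr; ring).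
  nra.
Qed.

Lemma filter_le {A} (l : list A) (p q : A -> bool) :
  (forall x, In x l -> p x = true -> q x = true) ->
  (length (filter p l) <= length (filter q l))%nat.
Proof.
  induction l as [|a l IH]; intros H; simpl; [lia|].
  assert (IH' := IH (fun x Hx => H x (or_intror Hx))).
  destruct (p a) eqn:E1.
  - rewrite (H a (or_introl eq_refl) E1). simpl. lia.
  - destruct (q a); simpl; lia.
Qed.

Lemma filter_lt {A} (l : list A) (p q : A -> bool) y :
  (forall x, In x l -> p x = true -> q x = true) -> In y l -> p y = false -> q y = true ->
  (length (filter p l) < length (filter q l))%nat.
Proof.
  induction l as [|a l IH]; intros H Hy Hp Hq; [destruct Hy|].
  simpl. destruct Hy as [<-|Hy].
  - rewrite Hp, Hq. simpl. pose proof (filter_le l p q (fun x Hx => H x (or_intror Hx))). lia.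
  - assert (IH' := IH (fun x Hx => H x (or_intror Hx)) Hy Hp Hq).
    destruct (p a) eqn:E1.
    + rewrite (H a (or_introl eq_refl) E1). simpl. lia.
    + destruct (q a); simpl; lia.
Qed.

Definition cnt (P : list pt) (d : R) : nat :=
  length (filter (fun p : pt * pt => if Rlt_dec (dist (fst p) (snd p)) d then true else false)
    (list_prod P P)).

Lemma pt_eq_dec (a b : pt) : {a = b} + {a <> b}.
Proof.
  destruct a as [a1 a2], b as [b1 b2].
  destruct (Req_dec_T a1 b1); destruct (Req_dec_T a2 b2);
  [left; congruence|right; congruence|right; congruence|right; congruence].
Qed.

Lemma last_cons (w u : pt) l : last (w :: l) u = last l w.
Proof.
  assert (G : forall (l : list pt) a d1 d2, last (a :: l) d1 = last (a :: l) d2).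
  { induction l0 as [|b l0 IH]; intros; [reflexivity|].
    change (last (b :: l0) d1 = last (b :: l0) d2). apply IH. }
  destruct l as [|p l]; [reflexivity|].
  change (last (p :: l) u = last (p :: l) w). apply G.
Qed.

Lemma cnt_decr P u v w s : 0 < (1 - s) * dist u w ->
  dist w v <= dist u v - (1 - s) * dist u w -> In w P -> In v P ->
  (cnt P (dist w v) < cnt P (dist u v))%nat.
Proof.
  intros Hp Hd Hw Hv.
      apply (filter_lt _ _ _ (w, v)).
      - intros [x y] _; simpl.
        destruct (Rlt_dec (dist x y) (dist w v)); [|discriminate].
        destruct (Rlt_dec (dist x y) (dist u v)); [reflexivity|]. lra.
      - apply in_prod; assumption.
      - simpl; destruct (Rlt_dec (dist w v) (dist w v)); [lra|reflexivity].
      - simpl; destruct (Rlt_dec (dist w v) (dist u v)); [reflexivity|]. lra.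
Qed.

Theorem lemma8 (k : nat) (P : list pt) (sel : pt -> nat -> option pt) :
  (24 < k)%nat ->
  is_OY_selection k P sel ->
  is_spanner P (OY_arc k P sel) (tau k).
Proof.
  intros Hk Hsel.
  pose proof (sin_beta k Hk) as Hsb.
  set (s := 2 * sin (beta k)) in *.
  assert (Hs01 : 0 <= s < 1) by (unfold s; lra).
  assert (Ht : tau k * (1 - s) = 1) by (rewrite tau_eq; unfold s; field; lra).
  assert (Ht0 : 0 < tau k) by (rewrite tau_eq; apply Rinv_0_lt_compat; unfold s; lra).
  set (t := tau k) in *.
  assert (Main : forall n u v, In u P -> In v P -> (cnt P (dist u v) <= n)%nat ->
    exists l, walk_ok (OY_arc k P sel) u l /\ last l u = v /\ walk_len u l <= t * dist u v).
  { induction n as [|n IH]; intros u v Hu Hv Hn;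
    (destruct (pt_eq_dec v u) as [Heq|Hne];
     [ subst v; exists nil; simpl; split; [exact I|split; [reflexivity| apply Rmult_le_pos; [lra|apply dist_pos]]] |]);
    destruct (step k P sel u v Hk Hsel Hu Hv Hne) as [w [Hw [Harc [Ha Hd]]]];
    fold s in Hd;
    assert (Hlt : (cnt P (dist w v) < cnt P (dist u v))%nat)
      by (apply (cnt_decr P u v w s); try assumption; apply Rmult_lt_0_compat; lra).
    - exfalso; lia.
    - assert (Hn2 : (cnt P (dist w v) <= n)%nat) by lia.
      destruct (IH w v Hw Hv Hn2) as [l [Hl1 [Hl2 Hl3]]].
      exists (w :: l). split; [simpl; split; [left; exact Harc| exact Hl1]|].
      split; [rewrite last_cons; exact Hl2|].
      simpl.
      assert (t * dist w v <= t * (dist u v - (1 - s) * dist u w)) by (apply Rmult_le_compat_l; lra).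
      nra. }
  intros u v Hu Hv. exact (Main _ u v Hu Hv (le_n _)).
Qed.
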